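(* Let $N_1\ge\cdots\ge N_C\ge1$ be class sizes with $N=\sum_y N_y$ and $\pi_y=N_y/N$. Suppose the local Lipschitz constants satisfy $\mu_y=c\,N_y^{-\kappa}$ for a constant $c>0$ and $\kappa>1$, let $\mu=\max_y\mu_y$ be the corresponding global Lipschitz constant, and suppose the empirical complexities scale as $\hat{\mathfrak{C}}_{\mathcal{S}}(\mathcal{F})=K/\sqrt{N}$ and $\hat{\mathfrak{C}}_{\mathcal{S}_y}(\mathcal{F})=K/\sqrt{N_y}$ for a constant $K>0$. Then the complexity term of the data-dependent bound is no larger than that of the union bound: $$\frac{\hat{\mathfrak{C}}_{\mathcal{S}}(\mathcal{F})}{C\pi_C}\sum_{y=1}^C\mu_y\sqrt{\pi_y}\;\le\;\frac{\mu}{C}\sum_{y=1}^C\hat{\mathfrak{C}}_{\mathcal{S}_y}(\mathcal{F}).$$ That is, the data-dependent bound (with complexity term on the left) is sharper than the union bound (with complexity term on the right).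
   Context: Context: two generalization bounds for the balanced risk in imbalanced classification with $C$ classes are compared. The union bound has complexity term $\frac{\mu}{C}\sum_y\hat{\mathfrak{C}}_{\mathcal{S}_y}(\mathcal{F})$, obtained by bounding each class separately with a loss that is Lipschitz with global constant $\mu$; the data-dependent bound has complexity term $\frac{\hat{\mathfrak{C}}_{\mathcal{S}}(\mathcal{F})}{C\pi_C}\sum_y\mu_y\sqrt{\pi_y}$, where $\mu_y$ are local Lipschitz constants: $|L(f(\boldsymbol{x}),y)-L(f'(\boldsymbol{x}),y)|\le\mu_y\|f(\boldsymbol{x})-f'(\boldsymbol{x})\|_2$ for all $\boldsymbol{x}\in\mathcal{S}_y$. Here $\hat{\mathfrak{C}}_{\mathcal{S}}(\mathcal{F})$ denotes the empirical (Rademacher-type) complexity of the score-function class $\mathcal{F}$ on the whole training set $\mathcal{S}$ and $\hat{\mathfrak{C}}_{\mathcal{S}_y}(\mathcal{F})$ that on the class-$y$ subsample $\mathcal{S}_y$ of size $N_y$. *)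

(* Defs.v *)
From mathcomp Require Import all_boot all_order all_algebra.
From mathcomp Require Import all_classical all_reals all_analysis.
Set Implicit Arguments. Unset Strict Implicit. Unset Printing Implicit Defensive.
Import Order.TTheory GRing.Theory Num.Theory.
Local Open Scope ring_scope.

Definition Ntot (C : nat) (N : nat -> nat) : nat := (\sum_(1 <= y < C.+1) N y)%N.

Definition prop_class {R : realType} (C : nat) (N : nat -> nat) (y : nat) : R :=
  (N y)%:R / (Ntot C N)%:R.

(* Main.v *)
Require Import Defs.
From mathcomp Require Import all_boot all_order all_algebra.
From mathcomp Require Import all_classical all_reals all_analysis.
From mathcomp Require Import ring lra.
Import Order.TTheory GRing.Theory Num.Theory.
Local Open Scope ring_scope.

Lemma key_pow0 (R : realType) (x k : R) : 0 < x ->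
  x `^ (- (k + 1)) * x = (x `^ k)^-1.
Proof.
move=> x0.
have -> : - (k + 1) = - k + (- 1) by ring.
rewrite powRD; last by apply/implyP => _; rewrite gt_eqF.
rewrite powR_inv1 ?ltW // powRN -mulrA mulVf ?gt_eqF // mulr1 //.
Qed.

Lemma key_pow (R : realType) (a b kappa : R) : 1 <= b -> b <= a -> 1 < kappa ->
  a `^ (- kappa) * a <= b `^ (- kappa) * b.
Proof.
move=> b1 ba k1.
have b0 : 0 < b by lra.
have a0 : 0 < a by lra.
have -> : kappa = (kappa - 1) + 1 by ring.
rewrite !key_pow0 //.
rewrite lef_pV2 ?posrE ?powR_gt0 //.
apply: ge0_ler_powR; rewrite ?nnegrE; lra.
Qed.

Lemma le_bigmax0 (R : realType) (F : nat -> R) (s : seq nat) x :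
  x \in s -> F x <= \big[Num.max/0]_(i <- s) F i.
Proof.
elim: s => // h t IH; rewrite inE big_cons le_max => /orP[/eqP->|/IH->];
  by rewrite ?lexx ?orbT.
Qed.

Theorem proposition2 (R : realType) (C : nat) (N : nat -> nat)
    (c kappa K : R) (mu : nat -> R) (mumax : R) (CS : R) (CSy : nat -> R) :
  (1 <= C)%N ->
  (forall i j, (1 <= i)%N -> (i <= j)%N -> (j <= C)%N -> (N j <= N i)%N) ->
  (1 <= N C)%N ->
  0 < c -> 1 < kappa -> 0 < K ->
  (forall y, (1 <= y <= C)%N -> mu y = c * ((N y)%:R `^ (- kappa))) ->
  mumax = \big[Num.max/0]_(1 <= y < C.+1) mu y ->
  CS = K / Num.sqrt ((Ntot C N)%:R) ->
  (forall y, (1 <= y <= C)%N -> CSy y = K / Num.sqrt ((N y)%:R)) ->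
  CS / (C%:R * prop_class C N C) * (\sum_(1 <= y < C.+1) mu y * Num.sqrt (prop_class C N y))
  <= mumax / C%:R * (\sum_(1 <= y < C.+1) CSy y).
Proof.
move=> C1 Nmono NC1 c0 k1 K0 Hmu Hmax HCS HCSy.
have Nt1 : (1 <= Ntot C N)%N.
  change (1 <= \sum_(1 <= y < C.+1) N y)%N; rewrite big_nat_recr //=; exact: leq_trans NC1 (leq_addl _ _).
have nC1 : 1 <= (N C)%:R :> R by rewrite ler1n.
have muCmax : mu C <= mumax.
  rewrite Hmax; apply: le_bigmax0; by rewrite mem_index_iota C1 /=.
have Cpos : 0 < C%:R :> R by rewrite ltr0n.
rewrite !mulr_sumr; apply: ler_sum_nat => y /andP[y1 yC].
have yC' : (y <= C)%N by rewrite -ltnS.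
have y1C : (1 <= y <= C)%N by rewrite y1 yC'.
have ny1 : (N C)%:R <= (N y)%:R :> R by rewrite ler_nat; apply: Nmono.
have kp := @key_pow _ _ _ _ nC1 ny1 k1.
rewrite HCSy // HCS /prop_class.
set Nt := (Ntot C N)%:R.
set ny := (N y)%:R.
set nC := (N C)%:R.
have Ntpos : 0 < Nt by rewrite ltr0n.
have nypos : 0 < ny by lra.
have Ht : Nt = Num.sqrt Nt ^+ 2 by rewrite sqr_sqrtr // ltW.
have Hy : ny = Num.sqrt ny ^+ 2 by rewrite sqr_sqrtr // ltW.
have sp : 0 < Num.sqrt Nt by rewrite sqrtr_gt0.
have ap : 0 < Num.sqrt ny by rewrite sqrtr_gt0.
have Hq : Num.sqrt (ny / Nt) = Num.sqrt ny / Num.sqrt Nt.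
  rewrite {1}Ht {1}Hy -expr_div_n sqrtr_sqr ger0_norm // divr_ge0 // ltW //.
rewrite Hq.
set s := Num.sqrt Nt in Ht sp Hq *.
set a := Num.sqrt ny in Hy ap Hq *.
have muy : mu y * ny <= mu C * nC.
  have hC : (1 <= C <= C)%N by rewrite C1 leqnn.
  rewrite (Hmu y y1C) (Hmu C hC) -!mulrA; apply: ler_wpM2l; [exact: ltW|exact: kp].
have e1 : K / s / (C%:R * (nC / Nt)) * (mu y * (a / s))
   = (K / C%:R / a) * (mu y * ny / nC).
  rewrite Ht Hy; field.
  rewrite !gt_eqF //= ?andbT; lra.
have e2 : mumax / C%:R * (K / a) = (K / C%:R / a) * mumax.
  field; rewrite !gt_eqF //= ?andbT.
rewrite e1 e2 ler_wpM2l //.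
  by rewrite !divr_ge0 // ltW.
rewrite ler_pdivrMr; last lra.
have : 0 <= mu C.
  have hC : (1 <= C <= C)%N by rewrite C1 leqnn.
  by rewrite (Hmu C hC); apply: mulr_ge0; [exact: ltW|exact: powR_ge0].
have nC0 : 1 <= nC by exact: nC1.
nra.
Qed.
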